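(* For every integer $k\in\{4-n,\dots,n-1\}$ and every $t\ge 3$ (for cycles) or $t\ge 1$ (for paths): (a) $\left\lceil\frac{t(n+k-3)}{2}\right\rceil\le\gamma_k^o(K_n\times C_t)\le t\left\lceil\frac{n+k+1}{2}\right\rceil$; (b) $\left\lceil\frac{t(n+k-3)+2}{2}\right\rceil\le\gamma_k^o(K_n\times P_t)\le t\left\lceil\frac{n+k+1}{2}\right\rceil$.
   Context: Graphs are finite and simple; $K_n$ is the complete graph on $n$ vertices, $C_t$ the cycle and $P_t$ the path on $t$ vertices. In a graph $G=(V,E)$, for $S\subseteq V$ and $v\in V$, $\delta_S(v)$ is the number of neighbours of $v$ in $S$, $\overline{S}=V\setminus S$, and $\partial(S)$ the set of vertices of $\overline{S}$ with a neighbour in $S$. A nonempty $S$ is an offensive $k$-alliance if $\delta_S(v)\ge\delta_{\overline{S}}(v)+k$ for every $v\in\partial(S)$, and a global offensive $k$-alliance if moreover it is dominating; $\gamma_k^o(G)$ is the minimum cardinality of a global offensive $k$-alliance. The Cartesian product $G_1\times G_2$ has vertex set $V_1\times V_2$, with $(u,v)\sim(u',v')$ iff either $u=u'$ and $v\sim v'$, or $v=v'$ and $u\sim u'$. *)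

(* Defs.v *)
From mathcomp Require Import all_boot all_order all_algebra.
Set Implicit Arguments. Unset Strict Implicit. Unset Printing Implicit Defensive.
Import Order.TTheory GRing.Theory Num.Theory.

(* A finite simple graph: vertex finType T with adjacency relation e
   (symmetric, irreflexive for the concrete graphs below). *)
Section Alliances.
Variables (T : finType) (e : rel T).

Definition deg_in (S : {set T}) (v : T) : nat := #|[set u in S | e v u]|.

Definition boundary (S : {set T}) : {set T} :=
  [set v in ~: S | [exists u in S, e v u]].

Definition dominating (S : {set T}) : bool :=
  [forall v in ~: S, [exists u in S, e v u]].

Definition offensive_alliance (k : int) (S : {set T}) : bool :=
  (S != set0) &&
  [forall v in boundary S, ((deg_in (~: S) v)%:Z + k <= (deg_in S v)%:Z)%R].

Definition global_offensive_alliance (k : int) (S : {set T}) : bool :=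
  offensive_alliance k S && dominating S.

(* gamma_k^o : minimum cardinality of a global offensive k-alliance
   (convention: #|T| if none exists; irrelevant for the theorem, where
   the whole vertex set is such an alliance). *)
Definition gamma_off (k : int) : nat :=
  \big[minn/#|T|]_(S : {set T} | global_offensive_alliance k S) #|S|.
End Alliances.

Definition complete_rel (n : nat) : rel 'I_n := fun i j => i != j.
Definition cycle_rel (t : nat) : rel 'I_t :=
  fun i j => (val j == (val i).+1 %% t) || (val i == (val j).+1 %% t).
Definition path_rel (t : nat) : rel 'I_t :=
  fun i j => (val j == (val i).+1) || (val i == (val j).+1).

Definition cart_rel (T1 T2 : finType) (e1 : rel T1) (e2 : rel T2)
  : rel (T1 * T2) :=
  fun x y => ((x.1 == y.1) && e2 x.2 y.2) || ((x.2 == y.2) && e1 x.1 y.1).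

Definition ceil_half (a : int) : int := ((a + 1) %/ 2)%Z.
Arguments complete_rel n : clear implicits.
Arguments cycle_rel t : clear implicits.
Arguments path_rel t : clear implicits.

(* Main.v *)
Require Import Defs.
From mathcomp Require Import all_boot all_order all_algebra.
From mathcomp.zify Require Import zify.
From mathcomp Require Import ring.
Import Order.TTheory GRing.Theory Num.Theory.

Lemma bigmin_seq_le (I : eqType) (r : seq I) (P : pred I) (F : I -> nat) x i0 :
  i0 \in r -> P i0 -> (\big[minn/x]_(i <- r | P i) F i <= F i0)%N.
Proof.
elim: r => [//|a r IH]; rewrite inE big_cons => /orP [/eqP <- ->|hr hP].
- exact: geq_minl.
- case: ifP => _; last exact: IH.
  exact: leq_trans (geq_minr _ _) (IH hr hP).
Qed.

Lemma bigmin_le (I : finType) (P : pred I) (F : I -> nat) x i0 :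
  P i0 -> (\big[minn/x]_(i | P i) F i <= F i0)%N.
Proof. move=> h; apply: bigmin_seq_le => //; exact: mem_index_enum. Qed.

Section Gen.
Variables (n t : nat) (e2 : rel 'I_t).
Local Notation T := ('I_n * 'I_t)%type.
Local Notation e := (cart_rel (complete_rel n) e2).
Definition dg (j : 'I_t) := #|[set j' | e2 j j']|.
Definition col (S : {set T}) (j : 'I_t) := [set u in S | u.2 == j].

Lemma nbr_card (v : T) : #|[set u | e v u]| = (n.-1 + dg v.2)%N.
Proof.
have -> : [set u | e v u] = ((fun i => (i, v.2)) @: [set~ v.1]) :|:
                           ((fun j => (v.1, j)) @: [set j | e2 v.2 j]).
  apply/setP => -[a b]; rewrite !inE /cart_rel /complete_rel /=.
  apply/idP/idP.
  - case/orP => /andP [/eqP <- h2].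
    + by apply/orP; right; apply/imsetP; exists b; rewrite ?inE.
    + by apply/orP; left; apply/imsetP; exists a; rewrite ?inE 1?eq_sym.
  - case/orP => /imsetP [x]; rewrite !inE => hx [-> ->].
    + by rewrite eqxx /= eq_sym hx orbT.
    + by rewrite eqxx hx.
rewrite cardsU.
have -> : (fun i => (i, v.2)) @: [set~ v.1] :&: (fun j => (v.1, j)) @: [set j | e2 v.2 j] = set0.
  apply/setP => -[a b]; rewrite !inE; apply/negbTE; apply/negP => /andP [/imsetP [x hx [h1 h2]] /imsetP [y _ [h3 h4]]].
  by move: hx; rewrite !inE -h1 h3 eqxx.
rewrite cards0 subn0 !card_imset; last first.
- by move=> x y [].
- by move=> x y [].
by rewrite cardsC1 card_ord.
Qed.

Lemma deg_sum (S : {set T}) (v : T) :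
  (deg_in e S v + deg_in e (~: S) v = n.-1 + dg v.2)%N.
Proof.
rewrite /deg_in.
have -> : [set u in S | e v u] = [set u | e v u] :&: S by apply/setP=>u; rewrite !inE andbC.
have -> : [set u in ~: S | e v u] = [set u | e v u] :\: S by apply/setP=>u; rewrite !inE andbC.
by rewrite cardsID nbr_card.
Qed.

Lemma card_sum_col (S : {set T}) : #|S| = (\sum_(j < t) #|col S j|)%N.
Proof.
rewrite -sum1_card (partition_big snd (fun _ => true)) //=.
apply: eq_bigr => j _; rewrite -sum1_card; apply: eq_bigl => u.
by rewrite !inE.
Qed.

Lemma col_bound (S : {set T}) (k : int) (j : 'I_t) :
  (k <= n%:Z + 1)%R ->
  (forall v, v \notin S -> ((deg_in e (~: S) v)%:Z + k <= (deg_in e S v)%:Z)%R) ->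
  (n%:Z - 1 + k <= (2 * #|col S j| + dg j)%:Z)%R.
Proof.
move=> hk hS.
case: (boolP [exists i, (i, j) \notin S]) => [/existsP [i hi] | hall].
- have h := hS _ hi.
  have hn : (0 < n)%N by case: i {hi h} => /= ? ?; lia.
  have htot : (deg_in e S (i, j) + deg_in e (~: S) (i, j) = n.-1 + dg j)%N.
    exact: (deg_sum S (i, j)).
  have hle : (deg_in e S (i, j) <= #|col S j| + dg j)%N.
    rewrite /deg_in.
    apply: leq_trans (_ : #|col S j :|: ((fun j' => (i, j')) @: [set j' | e2 j j'])| <= _)%N.
      apply: subset_leq_card; apply/subsetP => -[a b]; rewrite !inE /cart_rel /complete_rel /=.
      case/andP => hab /orP [] /andP [/eqP h1 h2]; subst.
      + by apply/orP; right; apply/imsetP; exists b; rewrite ?inE.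
      + by rewrite hab eqxx.
    rewrite cardsU card_imset; last by move=> x y [].
    exact: leq_subr.
  lia.
- have : (n <= #|col S j|)%N.
    apply: leq_trans (_ : #|(fun i : 'I_n => (i,j)) @: [set: 'I_n]| <= _)%N.
      by rewrite card_imset ?cardsT ?card_ord //; move=> x y [].
    apply: subset_leq_card; apply/subsetP => u /imsetP [i _ ->].
    rewrite !inE eqxx andbT.
    by move/existsPn: hall => /(_ i); rewrite negbK.
  lia.
Qed.

Lemma lower_gen (S : {set T}) (k : int) :
  (k <= n%:Z + 1)%R ->
  (forall v, v \notin S -> ((deg_in e (~: S) v)%:Z + k <= (deg_in e S v)%:Z)%R) ->
  (t%:Z * (n%:Z - 1 + k) <= (2 * #|S| + \sum_(j < t) dg j)%:Z)%R.
Proof.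
move=> hk hS.
rewrite card_sum_col big_distrr /= -big_split /=.
have -> : ((\sum_(j < t) (2 * #|col S j| + dg j)%N)%:Z = \sum_(j < t) ((2 * #|col S j| + dg j)%N)%:Z)%R.
  by rewrite -natz; rewrite natr_sum; apply: eq_bigr => j _; rewrite natz.
have -> : (t%:Z * (n%:Z - 1 + k) = \sum_(j < t) (n%:Z - 1 + k))%R.
  by rewrite sumr_const card_ord -mulr_natl natz.
apply: ler_sum => j _.
exact: col_bound.
Qed.

Lemma card_lt (s : nat) : (s <= n)%N -> #|[set i : 'I_n | (val i < s)%N]| = s.
Proof.
move=> hs.
have -> : [set i : 'I_n | (val i < s)%N] = (widen_ord hs) @: [set: 'I_s].
  apply/setP => i; rewrite inE; apply/idP/imsetP.
  - by move=> hi; exists (Ordinal hi) => //; apply: val_inj.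
  - by case=> x _ ->; rewrite /= ltn_ord.
by rewrite card_imset ?cardsT ?card_ord //; by move=> x y /(congr1 val) /= h; apply: val_inj.
Qed.

Lemma gamma_lower (k B : int) :
  (forall S : {set T}, (forall v, v \notin S -> ((deg_in e (~: S) v)%:Z + k <= (deg_in e S v)%:Z)%R) ->
     (B <= #|S|%:Z)%R) ->
  (B <= (gamma_off e k)%:Z)%R.
Proof.
move=> hB; rewrite /gamma_off.
apply: (big_ind (fun m : nat => (B <= m%:Z)%R)).
- rewrite -cardsT; apply: hB => v; by rewrite inE.
- by move=> a b ha hb; rewrite /minn; case: ifP.
- move=> S /andP [/andP [_ /forallP h] /forallP hd]; apply: hB => v hv.
  have := h v; rewrite /boundary inE in_setC hv /=.
  have := hd v; rewrite in_setC hv /= => ->.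
  by move/implyP; apply.
Qed.

Lemma gamma_upper (k : int) (s : nat) :
  (0 < t)%N -> (0 < s)%N -> (s <= n)%N -> (forall j, (dg j <= 2)%N) ->
  (n%:Z + 1 + k <= 2 * s%:Z)%R ->
  (gamma_off e k <= s * t)%N.
Proof.
move=> ht hs0 hsn hdg hk.
pose S0 := [set u : T | (val u.1 < s)%N].
have hS0 : S0 = setX [set i : 'I_n | (val i < s)%N] [set: 'I_t].
  by apply/setP => -[a b]; rewrite !inE andbT.
have hn : (0 < n)%N by lia.
have hga : global_offensive_alliance e k S0.
  apply/andP; split; first (apply/andP; split).
  - apply/set0Pn; exists (Ordinal hn, Ordinal ht); by rewrite inE.
  - apply/forallP => -[i j]; apply/implyP; rewrite inE => /andP [hv _].
    move: hv; rewrite in_setC inE /= -leqNgt => hi.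
    have hdS : (s <= deg_in e S0 (i, j))%N.
      rewrite /deg_in -{1}(card_lt s hsn).
      rewrite -(card_imset _ (_ : injective (fun i' : 'I_n => (i', j)))); last by move=> x y [].
      apply: subset_leq_card; apply/subsetP => u /imsetP [i' hi' ->].
      move: hi'; rewrite !inE /cart_rel /complete_rel /= eqxx /= => hi'.
      rewrite hi' /=; apply/orP; right; apply/eqP => h; subst; lia.
    move: (deg_sum S0 (i, j)) (hdg j); rewrite /= -subn1 => h1 h2; set a := deg_in _ S0 (i,j) in hdS h1 *; set b := deg_in _ (~: S0) (i,j) in h1 *. clearbody a b; lia.
  - apply/forallP => -[i j]; apply/implyP; rewrite in_setC inE /= -leqNgt => hi.
    apply/existsP; exists (Ordinal hn, j); rewrite inE /= hs0 /cart_rel /complete_rel /= eqxx /=.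
    apply/orP; right; apply/eqP => h; subst; move: hi => /= hi; lia.
rewrite /gamma_off; apply: leq_trans (@bigmin_le _ _ (fun S : {set T} => #|S|) _ S0 hga) _.
by rewrite hS0 cardsX card_lt // cardsT card_ord.
Qed.
End Gen.

Lemma card_atmost (T : finType) (A : {set T}) (b : bool) :
  (forall x y, x \in A -> y \in A -> x = y) -> (forall x, x \in A -> b) -> (#|A| <= b)%N.
Proof.
move=> h hb; case: (set_0Vmem A) => [->|[x hx]]; first by rewrite cards0.
rewrite (hb x hx).
apply: leq_trans (_ : #|[set x]| <= 1)%N; last by rewrite cards1.
by apply: subset_leq_card; apply/subsetP => y hy; rewrite inE; apply/eqP; exact: h.
Qed.

Lemma modS_eq (t : nat) (x : 'I_t) : (x.+1 %% t = if x.+1 == t then 0 else x.+1)%N.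
Proof.
case: eqP => [->|h]; first by rewrite modnn.
by rewrite modn_small //; have := ltn_ord x; lia.
Qed.

Lemma dg_cycle (t : nat) (j : 'I_t) : (@dg t (cycle_rel t) j <= 2)%N.
Proof.
rewrite /dg.
apply: leq_trans (_ : #|[set j' : 'I_t | nat_of_ord j' == j.+1 %% t] :|:
                       [set j' : 'I_t | nat_of_ord j == j'.+1 %% t]| <= 2)%N.
  by apply: subset_leq_card; apply/subsetP => x; rewrite !inE.
rewrite cardsU; apply: leq_trans (leq_subr _ _) _.
have h1 := @card_atmost _ [set j' : 'I_t | nat_of_ord j' == j.+1 %% t] true.
have h2 := @card_atmost _ [set j' : 'I_t | nat_of_ord j == j'.+1 %% t] true.
have : (#|[set j' : 'I_t | nat_of_ord j' == j.+1 %% t]| <= 1)%N.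
  apply: h1 => // x y; rewrite !inE => /eqP hx /eqP hy; apply: ord_inj; lia.
have : (#|[set j' : 'I_t | nat_of_ord j == j'.+1 %% t]| <= 1)%N.
  apply: h2 => // x y; rewrite !inE => /eqP hx /eqP hy; apply: ord_inj.
  move: hx hy; rewrite !modS_eq; have := ltn_ord x; have := ltn_ord y.
  by do 2 case: eqP; lia.
lia.
Qed.

Lemma dg_path (t : nat) (j : 'I_t) : (@dg t (path_rel t) j <= (0 < j) + (j.+1 < t))%N.
Proof.
rewrite /dg.
apply: leq_trans (_ : #|[set j' : 'I_t | nat_of_ord j' == j.+1] :|:
                       [set j' : 'I_t | nat_of_ord j == j'.+1]| <= _)%N.
  by apply: subset_leq_card; apply/subsetP => x; rewrite !inE.
rewrite cardsU; apply: leq_trans (leq_subr _ _) _.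
rewrite addnC; apply: leq_add.
- apply: card_atmost => [x y|x]; rewrite !inE => /eqP hx.
  + by move=> /eqP hy; apply: ord_inj; lia.
  + by have := ltn_ord x; lia.
- apply: card_atmost => [x y|x]; rewrite !inE => /eqP hx.
  + by move=> /eqP hy; apply: ord_inj; lia.
  + by have := ltn_ord x; lia.
Qed.

Lemma sum_path (t : nat) : (0 < t)%N ->
  (\sum_(j < t) ((0 < j) + (j.+1 < t)) = 2 * t.-1)%N.
Proof.
case: t => [//|t] _ /=.
rewrite big_split /= big_ord_recl big_ord_recr /=.
have -> : (\sum_(i < t) (0 < lift ord0 i) = t)%N.
  by rewrite (eq_bigr (fun _ => 1%N)) ?sum1_card ?card_ord.
have -> : (\sum_(i < t) ((widen_ord (leqnSn t) i).+1 < t.+1) = t)%N.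
  rewrite (eq_bigr (fun _ => 1%N)) ?sum1_card ?card_ord // => i _ /=.
  by rewrite ltnS ltn_ord.
by rewrite ltnn; lia.
Qed.



Theorem mainTheorem16 (n : nat) (k : int) :
  (4%:Z - n%:Z <= k)%R -> (k <= n%:Z - 1)%R ->
  (forall t : nat, (3 <= t)%N ->
     (ceil_half (t%:Z * (n%:Z + k - 3)) <=
        (gamma_off (cart_rel (complete_rel n) (cycle_rel t)) k)%:Z)%R /\
     ((gamma_off (cart_rel (complete_rel n) (cycle_rel t)) k)%:Z <=
        t%:Z * ceil_half (n%:Z + k + 1))%R) /\
  (forall t : nat, (1 <= t)%N ->
     (ceil_half (t%:Z * (n%:Z + k - 3) + 2) <=
        (gamma_off (cart_rel (complete_rel n) (path_rel t)) k)%:Z)%R /\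
     ((gamma_off (cart_rel (complete_rel n) (path_rel t)) k)%:Z <=
        t%:Z * ceil_half (n%:Z + k + 1))%R).
Proof.
move=> hk1 hk2.
have hkn : (k <= n%:Z + 1)%R by lia.
have [s hs] : exists s : nat, (ceil_half (n%:Z + k + 1) = s%:Z)%R.
  exists `|ceil_half (n%:Z + k + 1)|%N; rewrite gez0_abs //; rewrite /ceil_half; lia.
have hs' := hs; rewrite /ceil_half in hs'.
have hs1 : (0 < s)%N by lia.
have hsn : (s <= n)%N by lia.
have hs2 : (n%:Z + 1 + k <= 2 * s%:Z)%R by lia.
split => t ht; split.
- apply: gamma_lower => S hS.
  have h := lower_gen n t (cycle_rel t) S k hkn hS.
  have hD : (\sum_(j < t) dg t (cycle_rel t) j <= 2 * t)%N.
    apply: (@leq_trans (\sum_(j < t) 2)%N); first by apply: leq_sum => j _; exact: dg_cycle.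
    by rewrite sum_nat_const card_ord mulnC.
  move: h hD; set D := (\sum_(j < t) _)%N; set c := #|S|.
  have E : (t%:Z * (n%:Z + k - 3) = t%:Z * (n%:Z - 1 + k) - 2 * t%:Z)%R by ring.
  rewrite /ceil_half E; set P := (t%:Z * (n%:Z - 1 + k))%R.
  lia.
- have h := gamma_upper n t (cycle_rel t) k s (ltnW (ltnW ht)) hs1 hsn (@dg_cycle t) hs2.
  by rewrite hs -PoszM lez_nat mulnC.
- apply: gamma_lower => S hS.
  have h := lower_gen n t (path_rel t) S k hkn hS.
  have hD : (\sum_(j < t) dg t (path_rel t) j <= 2 * t.-1)%N.
    apply: (@leq_trans (\sum_(j < t) ((0 < j) + (j.+1 < t)))%N); first by apply: leq_sum => j _; exact: dg_path.
    by rewrite sum_path.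
  move: h hD; set D := (\sum_(j < t) _)%N; set c := #|S|.
  have E : (t%:Z * (n%:Z + k - 3) = t%:Z * (n%:Z - 1 + k) - 2 * t%:Z)%R by ring.
  rewrite /ceil_half E; set P := (t%:Z * (n%:Z - 1 + k))%R.
  lia.
- have hdg : forall j, (dg t (path_rel t) j <= 2)%N.
    by move=> j; apply: leq_trans (dg_path t j) _; case: (0 < j)%N; case: (j.+1 < t)%N.
  have h := gamma_upper n t (path_rel t) k s ht hs1 hsn hdg hs2.
  by rewrite hs -PoszM lez_nat mulnC.
Qed.
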